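(* Let $d>1$ and let $S$ be a collection of at most $d$ simplices over $[n]$, each of dimension at most $d$. Then all $d$-faces and all $(d-1)$-faces of $K(S)$ can be eliminated by a sequence of elementary $(d-1)$- and $(d-2)$-collapses (starting from $K(S)$).
   Context: A $d$-simplex is a subset of $[n]$ of size $d+1$; a simplicial complex is a family of simplices closed under taking subsets. For a set $S$ of simplices, $K(S)$ is the complex of all subsets of members of $S$. In a simplicial complex $K$, an $i$-face $\zeta$ is exposed if it is contained in exactly one $(i+1)$-face $\tau$ of $K$ (such $\tau$ is then necessarily a maximal face). An elementary $i$-collapse is the removal of such a pair $\zeta,\tau$ from $K$; the result is again a simplicial complex. *)

(* Defs.v *)
(* Vertices are 'I_n (= [n]); simplices are finite sets of
   vertices; a complex is a set of simplices. An i-face has i+1 vertices. *)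
From mathcomp Require Import all_boot.
Set Implicit Arguments. Unset Strict Implicit. Unset Printing Implicit Defensive.

Definition Kc (n : nat) (S : {set {set 'I_n}}) : {set {set 'I_n}} :=
  [set z : {set 'I_n} | [exists s in S, z \subset s]].

Definition exposed_by (n i : nat) (K : {set {set 'I_n}}) (zeta tau : {set 'I_n}) : Prop :=
  [/\ zeta \in K /\ #|zeta| = i.+1, tau \in K /\ #|tau| = i.+2, zeta \subset tau &
      (forall t, t \in K -> #|t| = i.+2 -> zeta \subset t -> t = tau)].

Definition elem_collapse (n i : nat) (K K' : {set {set 'I_n}}) : Prop :=
  exists zeta tau, exposed_by i K zeta tau /\ K' = K :\: [set zeta; tau].

Inductive collapses_to (n : nat) (I : seq nat) :
    {set {set 'I_n}} -> {set {set 'I_n}} -> Prop :=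
  | ct_refl K : collapses_to I K K
  | ct_step i K K1 K' : i \in I -> elem_collapse i K K1 ->
      collapses_to I K1 K' -> collapses_to I K K'.

(* Main.v *)
Require Import Defs.
From mathcomp Require Import all_boot zify.
From Stdlib Require Import Classical.
Set Implicit Arguments. Unset Strict Implicit.

Definition closedK n d (K : {set {set 'I_n}}) :=
  forall t z : {set 'I_n}, t \in K -> z \subset t -> d.-1 <= #|z| -> z \in K.
Definition highin n d (A B : {set {set 'I_n}}) :=
  forall z : {set 'I_n}, z \in A -> d <= #|z| -> z \in B.

Lemma collapses_trans n I (K1 K2 K3 : {set {set 'I_n}}) :
  collapses_to I K1 K2 -> collapses_to I K2 K3 -> collapses_to I K1 K3.
Proof. elim=> // i K Ka K' Hi Hc _ IH H; exact: (ct_step Hi Hc (IH H)). Qed.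

Lemma KcP n (S : {set {set 'I_n}}) (z : {set 'I_n}) :
  reflect (exists2 s, s \in S & z \subset s) (z \in Kc S).
Proof.
rewrite inE; apply: (iffP existsP) => [[s /andP[]]|[s]]; first by eauto.
by move=> ? ?; exists s; apply/andP.
Qed.

Lemma sub_eq n (t s : {set 'I_n}) : t \subset s -> #|s| <= #|t| -> t = s.
Proof. by move=> ts c; apply/eqP; rewrite eqEcard ts. Qed.

Lemma closed_collapse n d i (K : {set {set 'I_n}}) (zeta tau : {set 'I_n}) :
  d.-1 <= i.+1 -> closedK d K -> exposed_by i K zeta tau ->
  closedK d (K :\: [set zeta; tau]).
Proof.
move=> hi CK [[zetaK zc] [tauK tc] zt uq].
have H1 : forall t, t \in K -> tau \subset t -> t = tau.
  move=> t tK taut; case: (boolP (t \subset tau)) => [h|]; first by apply/eqP; rewrite eqEsubset h.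
  case/subsetPn=> x xt xtau.
  have xz : x \notin zeta by apply: contra xtau; apply: (subsetP zt).
  have ut : x |: zeta \subset t.
    by rewrite subUset sub1set xt (subset_trans zt taut).
  have uK : x |: zeta \in K by apply: (CK t) => //; rewrite cardsU1 xz zc; lia.
  have := uq _ uK; rewrite cardsU1 xz zc => /(_ erefl (subsetUr _ _)) eu.
  by move: xtau; rewrite -eu setU11.
have H2 : forall t, t \in K -> zeta \subset t -> t = zeta \/ t = tau.
  move=> t tK zt'; case: (boolP (t \subset zeta)) => [h|]; first by left; apply/eqP; rewrite eqEsubset h.
  case/subsetPn=> x xt xz.
  have ut : x |: zeta \subset t by rewrite subUset sub1set xt.
  have uK : x |: zeta \in K by apply: (CK t) => //; rewrite cardsU1 xz zc; lia.
  have := uq _ uK; rewrite cardsU1 xz zc => /(_ erefl (subsetUr _ _)) eu.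
  by right; apply: H1 => //; rewrite -eu.
move=> t z; rewrite !inE => /andP[tn tK] zt' hz.
have zK : z \in K by apply: (CK t).
rewrite zK andbT; apply/negP => /orP[/eqP ez|/eqP ez]; subst z.
  by case: (H2 t tK zt') => et; subst t; rewrite eqxx ?orbT in tn.
by rewrite (H1 t tK zt') eqxx orbT in tn.
Qed.

Lemma diff_single n (s s' : {set 'I_n}) a :
  a \in s -> s :\ a \subset s' -> ~~ (s \subset s') -> s :\: s' = [set a].
Proof.
move=> As sub ns; apply/setP=> x; rewrite !inE.
case: (x =P a) => [->|xa]; last first.
  apply/negP=> /andP[xs' xs]; move/subsetP: sub => /(_ x); rewrite !inE xs andbT.
  by move/eqP: xa => -> /(_ isT); rewrite (negbTE xs').
rewrite As andbT; apply/negP => as'; apply: (negP ns); apply/subsetP=> y ys.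
case: (y =P a) => [->//|ya]; apply: (subsetP sub); rewrite !inE ys andbT; exact/eqP.
Qed.

Lemma diff_pair n (s s' : {set 'I_n}) a b :
  a \in s -> b \in s -> s :\: [set a; b] \subset s' -> a \notin s' -> b \notin s' ->
  s :\: s' = [set a; b].
Proof.
move=> As Bs sub na nb; apply/setP=> x; rewrite !inE.
case: (x =P a) => [->|xa]; first by rewrite na As.
case: (x =P b) => [->|xb]; first by rewrite nb Bs orbT.
apply/negP=> /andP[xs' xs]; move/subsetP: sub => /(_ x); rewrite !inE xs andbT.
by move/eqP/negbTE: xa => -> ; move/eqP/negbTE: xb => -> /(_ isT); rewrite (negbTE xs').
Qed.

Lemma pick_single n (A : {set 'I_n}) v x0 : A = [set v] -> odflt x0 [pick x in A] = v.
Proof.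
move=> ->; case: pickP => [x|H]; first by rewrite inE => /eqP.
by have := H v; rewrite inE eqxx.
Qed.

Lemma set2D1r n (a b : 'I_n) : a != b -> [set a; b] :\ b = [set a].
Proof.
move=> ab; apply/setP=> x; rewrite !inE.
case: eqP => [xb|_]; case: eqP => //= xa; subst; by rewrite eqxx in ab.
Qed.

Lemma set2D1l n (a b : 'I_n) : a != b -> [set a; b] :\ a = [set b].
Proof. by move=> ab; rewrite setUC set2D1r // eq_sym. Qed.

Lemma card_facet n (s : {set 'I_n}) a : a \in s -> #|s :\ a| = #|s|.-1.
Proof. by move=> As; rewrite (cardsD1 a s) As. Qed.

Lemma card_ridge n (s : {set 'I_n}) a b : a \in s -> b \in s -> a != b ->
  #|s :\: [set a; b]| = #|s| - 2.
Proof.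
move=> As Bs ab; rewrite cardsDS ?cards2 ?ab //.
by rewrite subUset !sub1set As Bs.
Qed.

Lemma facet_of n (z s : {set 'I_n}) : z \subset s -> #|z|.+1 = #|s| ->
  exists2 a, a \in s & z = s :\ a.
Proof.
move=> zs c.
have : #|s :\: z| == 1 by rewrite cardsDS // -c subSnn.
case/cards1P=> a ea.
have : a \in s :\: z by rewrite ea set11.
rewrite inE => /andP[az As]; exists a => //.
apply/setP=> x; rewrite !inE.
case: (boolP (x \in z)) => xz; first by rewrite (subsetP zs x xz) andbT; apply/esym/negP => /eqP xa; rewrite -xa xz in az.
case: (boolP (x \in s)) => xs; rewrite ?andbF ?andbT //.
have : x \in s :\: z by rewrite inE xz xs.
by rewrite ea inE => ->.
Qed.

Lemma L1 n (S' : {set {set 'I_n}}) (s : {set 'I_n}) :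
  (forall s', s' \in S' -> ~~ (s \subset s')) -> #|S'| < #|s| ->
  exists2 a, a \in s & forall s', s' \in S' -> ~~ (s :\ a \subset s').
Proof.
move=> Hns Hc; apply: NNPP => Hno.
have H : forall a, a \in s -> exists2 s', s' \in S' & s :\ a \subset s'.
  move=> a Ha; apply: NNPP => H2; apply: Hno; exists a => // s' Hs'.
  by apply/negP => Hsub; apply: H2; exists s'.
have : 0 < #|s| by lia.
rewrite card_gt0 => /set0Pn [x0 _].
pose T := [set s :\: s' | s' in S'].
pose f := fun X : {set 'I_n} => odflt x0 [pick x in X].
have sub : s \subset f @: T.
  apply/subsetP => a Ha; have [s' Hs' Hsub] := H a Ha.
  apply/imsetP; exists (s :\: s'); first by apply/imsetP; exists s'.
  by rewrite /f (pick_single _ (diff_single Ha Hsub (Hns s' Hs'))).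
have := subset_leq_card sub.
have := leq_imset_card f T; have := leq_imset_card (fun s' => s :\: s') S'.
rewrite -/T => h1 h2 h3; have := leq_trans h3 (leq_trans h2 h1); move=> h; by move: (leq_ltn_trans h Hc); rewrite ltnn.
Qed.

Lemma pair_blocker n d (S' : {set {set 'I_n}}) (s : {set 'I_n}) (K : {set {set 'I_n}}) a b
  (t : {set 'I_n}) :
  #|s| = d.+1 -> highin d (Kc S') K ->
  (forall z : {set 'I_n}, z \in K -> d <= #|z| -> z \in Kc S' \/ z \subset s) ->
  a \in s -> b \in s -> s :\ a \notin Kc S' -> s :\ b \notin K ->
  t \in K -> #|t| = d -> s :\: [set a; b] \subset t -> t != s :\ a ->
  exists2 s', s' \in S' & s :\: s' = [set a; b].
Proof.
move=> cs HK1 HK2 As Bs naK nbK tK ct rt tna.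
have cfa : #|s :\ a| = d by rewrite card_facet // cs.
have cfb : #|s :\ b| = d by rewrite card_facet // cs.
case: (HK2 t tK) => [|/KcP[s' s'S ts']|ts]; first by lia.
  exists s' => //; apply: diff_pair => //.
  - by apply: subset_trans rt ts'.
  - apply/negP => as'; apply: (negP nbK); apply: HK1; last by rewrite cfb.
    apply/KcP; exists s' => //; apply/subsetP => x; rewrite !inE => /andP[xb xs].
    case: (eqVneq x a) => [->//|xa]; apply: (subsetP ts'); apply: (subsetP rt).
    by rewrite !inE xs negb_or xa xb.
  - apply/negP => bs'; apply: (negP naK).
    apply/KcP; exists s' => //; apply/subsetP => x; rewrite !inE => /andP[xa xs].
    case: (eqVneq x b) => [->//|xb]; apply: (subsetP ts'); apply: (subsetP rt).
    by rewrite !inE xs negb_or xa xb.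
have [c Cs ec] := facet_of ts (etrans (congr1 S ct) (esym cs)).
subst t.
case: (eqVneq c a) => [eca|nca]; first by rewrite eca eqxx in tna.
case: (eqVneq c b) => [ecb|ncb]; first by rewrite -ecb tK in nbK.
have : c \in s :\: [set a; b] by rewrite !inE Cs negb_or nca ncb.
by move/(subsetP rt); rewrite !inE eqxx.
Qed.

Lemma set1D1 n (v c : 'I_n) : v != c -> [set v] :\ c = [set v].
Proof.
move=> vc; apply/setP=> x; rewrite !inE.
case: eqP => [xv|_]; last by case: (x != c).
by subst x; case: eqP => // e; rewrite e eqxx in vc.
Qed.

Lemma counting n d (S' : {set {set 'I_n}}) (s : {set 'I_n}) (K : {set {set 'I_n}}) a0 b0 :
  #|s| = d.+1 -> #|S'| < d -> highin d (Kc S') K ->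
  (forall z : {set 'I_n}, z \in K -> d <= #|z| -> z \in Kc S' \/ z \subset s) ->
  (forall s', s' \in S' -> ~~ (s \subset s')) ->
  a0 \in s -> s :\ a0 \in K -> s :\ a0 \notin Kc S' -> b0 \in s -> s :\ b0 \notin K ->
  exists a b, [/\ a \in s, b \in s, s :\ a \in K, s :\ a \notin Kc S' & s :\ b \notin K] /\
     (forall t, t \in K -> #|t| = d -> s :\: [set a; b] \subset t -> t = s :\ a).
Proof.
move=> cs cS' HK1 HK2 Hns A0s A0K A0n B0s B0K.
apply: NNPP => Hno.
have H : forall a b, a \in s -> b \in s -> s :\ a \in K -> s :\ a \notin Kc S' ->
    s :\ b \notin K -> exists2 s', s' \in S' & s :\: s' = [set a; b].
  move=> a b As Bs AK An BK; apply: NNPP => H2; apply: Hno; exists a, b; split => //.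
  move=> t tK ct rt; apply: NNPP => tne; apply: H2.
  by apply: (pair_blocker cs HK1 HK2 As Bs An BK tK ct rt); apply/eqP.
have cf : forall v, v \in s -> #|s :\ v| = d by move=> v vs; rewrite card_facet // cs.
have ab0 : a0 != b0 by apply/eqP => e; rewrite -e A0K in B0K.
pose T := [set s :\: s' | s' in S'].
pose f := fun X : {set 'I_n} => odflt a0 [pick x in X :\ (if a0 \in X then a0 else b0)].
have sub : s :\ a0 \subset f @: T.
  apply/subsetP => v; rewrite !inE => /andP[va vs].
  case: (boolP (s :\ v \in Kc S')) => [vS|vnot].
    have vK : s :\ v \in K by apply: HK1 => //; rewrite cf.
    have vb : v != b0 by apply/eqP => e; rewrite -e vK in B0K.
    case/KcP: vS => s' s'S sub'.
    have eX := diff_single vs sub' (Hns s' s'S).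
    apply/imsetP; exists (s :\: s'); first by apply/imsetP; exists s'.
    rewrite /f eX inE.
    have -> : (a0 == v) = false by apply/negbTE; rewrite eq_sym.
    by rewrite (pick_single _ (set1D1 vb)).
  case: (boolP (s :\ v \in K)) => vK.
    have vb : v != b0 by apply/eqP => e; rewrite -e vK in B0K.
    have [s' s'S eX] := H v b0 vs B0s vK vnot B0K.
    apply/imsetP; exists (s :\: s'); first by apply/imsetP; exists s'.
    rewrite /f eX.
    have -> : (a0 \in [set v; b0]) = false by rewrite !inE eq_sym (negbTE va) (negbTE ab0).
    by rewrite (pick_single _ (set2D1r vb)).
  have av : a0 != v by rewrite eq_sym.
  have [s' s'S eX] := H a0 v A0s vs A0K A0n vK.
  apply/imsetP; exists (s :\: s'); first by apply/imsetP; exists s'.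
  rewrite /f eX.
  have -> : (a0 \in [set a0; v]) by rewrite !inE eqxx.
  by rewrite (pick_single _ (set2D1l av)).
have h3 := subset_leq_card sub.
have h2 := leq_imset_card f T.
have h1 := leq_imset_card (fun s' => s :\: s') S'.
rewrite -/T in h1.
have := leq_ltn_trans (leq_trans h3 (leq_trans h2 h1)) cS'.
by rewrite cf // ltnn.
Qed.

Definition invB n d (S' : {set {set 'I_n}}) (s : {set 'I_n}) b0 (K : {set {set 'I_n}}) :=
  [/\ closedK d K, highin d (Kc S') K,
      (forall z : {set 'I_n}, z \in K -> d <= #|z| -> z \in Kc S' \/ z \subset s),
      s \notin K & s :\ b0 \notin K].

Definition goalB n d (S' : {set {set 'I_n}}) (K : {set {set 'I_n}}) :=
  exists K1, collapses_to [:: d.-1; d.-2] K K1 /\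
    [/\ closedK d K1, highin d (Kc S') K1 & highin d K1 (Kc S')].

Lemma card_lt_remove n (K : {set {set 'I_n}}) (z tau : {set 'I_n}) :
  tau \in K -> #|K :\: [set z; tau]| < #|K|.
Proof.
move=> tK; have : K :\: [set z; tau] \subset K :\ tau.
  by apply/subsetP=> x; rewrite !inE negb_or => /andP[/andP[_ ->] ->].
by move/subset_leq_card; rewrite (cardsD1 tau K) tK /= add1n ltnS.
Qed.

Lemma stageB_step n d (S' : {set {set 'I_n}}) (s : {set 'I_n}) b0 (K : {set {set 'I_n}}) :
  1 < d -> #|s| = d.+1 -> #|S'| < d -> (forall s', s' \in S' -> ~~ (s \subset s')) -> b0 \in s ->
  (forall K2 : {set {set 'I_n}}, #|K2| < #|K| -> invB d S' s b0 K2 -> goalB d S' K2) ->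
  invB d S' s b0 K -> goalB d S' K.
Proof.
move=> d1 cs cS' Hns B0s IH [CK HK1 HK2 sK bK].
have e1 : d.-1 = d.-2.+1 by move: d1; clear; lia.
have e2 : d = d.-2.+2 by move: d1; clear; lia.
have e3 : d.-1 < d by move: d1; clear; lia.
case: (classic (exists z, z \in K /\ d <= #|z| /\ z \notin Kc S')) => [[z [zK [hz zn]]]|Hn];
  last first.
  exists K; split; first exact: ct_refl.
  split => // z zK hz; apply: NNPP => zn; apply: Hn; exists z; split => //; split => //.
  exact/negP.
have zs : z \subset s by case: (HK2 z zK hz) => //; rewrite (negbTE zn).
have zns : z != s by apply/eqP => e; rewrite -e zK in sK.
have : #|z| < #|s| by apply: proper_card; rewrite properEneq zns.
move=> czs.
have czs1 : #|z|.+1 = #|s| by lia.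
have [a0 A0s ez] := facet_of zs czs1.
subst z.
have [a [b [[As Bs AK An BK] uq]]] := counting cs cS' HK1 HK2 Hns A0s zK zn B0s bK.
have ab : a != b by apply/eqP => e; rewrite -e AK in BK.
pose r := s :\: [set a; b]; pose tau := s :\ a.
have cr : #|r| = d.-1 by rewrite /r (card_ridge As Bs ab) cs subSS subn1.
have ctau : #|tau| = d by rewrite /tau card_facet // cs.
have tauK : tau \in K by [].
have rt : r \subset tau.
  by apply/subsetP => x; rewrite !inE negb_or => /andP[/andP[-> _] ->].
have rK : r \in K by apply: (CK tau) => //; rewrite cr.
have ex : exposed_by d.-2 K r tau.
  split; [by rewrite rK cr e1 | by rewrite tauK ctau -e2 | done | ].
  by move=> t tK ct rtt; apply: uq => //; rewrite ct -e2.
set K2 := K :\: [set r; tau].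
have [K1 [c1 G1]] : goalB d S' K2.
  apply: IH; first exact: card_lt_remove.
  split.
  - by apply: (closed_collapse _ CK ex); rewrite -e1.
  - move=> z zS hz2; rewrite !inE (HK1 z zS hz2) andbT negb_or.
    apply/andP; split; apply/eqP => e; subst z; first by move: e3; rewrite -cr ltnNge hz2.
    by rewrite zS in An.
  - by move=> z; rewrite inE => /andP[_ zK3] hz3; apply: HK2.
  - by rewrite inE negb_and sK orbT.
  - by rewrite inE negb_and bK orbT.
exists K1; split => //.
apply: (ct_step (i := d.-2)); last exact: c1.
  by rewrite !inE eqxx orbT.
by exists r, tau.
Qed.

Lemma stageB n d (S' : {set {set 'I_n}}) (s : {set 'I_n}) b0 (K : {set {set 'I_n}}) :
  1 < d -> #|s| = d.+1 -> #|S'| < d -> (forall s', s' \in S' -> ~~ (s \subset s')) -> b0 \in s ->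
  invB d S' s b0 K -> goalB d S' K.
Proof.
move=> d1 cs cS' Hns B0s.
move: {2}#|K|.+1 (ltnSn #|K|) => m; elim: m K => // m IH K HK.
apply: stageB_step => // K2 lt2; apply: IH; lia.
Qed.

Lemma KcD1 n (S : {set {set 'I_n}}) (s z : {set 'I_n}) :
  z \in Kc S -> z \subset s \/ z \in Kc (S :\ s).
Proof.
case/KcP=> s'' sS zs; case: (eqVneq s'' s) => [e|ne]; first by left; rewrite -e.
by right; apply/KcP; exists s'' => //; rewrite !inE ne.
Qed.

Lemma KcS n (S : {set {set 'I_n}}) (s z : {set 'I_n}) :
  z \in Kc (S :\ s) -> z \in Kc S.
Proof. by case/KcP=> s'' /setD1P[_ sS] zs; apply/KcP; exists s''. Qed.

Lemma middle n d (S : {set {set 'I_n}}) (s : {set 'I_n}) (K : {set {set 'I_n}}) :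
  1 < d -> #|S| <= d -> (forall s, s \in S -> #|s| <= d.+1) -> s \in S ->
  closedK d K -> highin d (Kc S) K -> highin d K (Kc S) -> goalB d (S :\ s) K.
Proof.
move=> d1 hS hs sS CK HK1 HK2.
have e1 : d.-1 = d.-2.+1 by move: d1; clear; lia.
have e2 : d = d.-2.+2 by move: d1; clear; lia.
have e4 : d = d.-1.+1 by move: d1; clear; lia.
set S' := S :\ s.
have cS' : #|S'| < d.
  by move: hS; rewrite (cardsD1 s S) sS /= add1n.
have HK1' : highin d (Kc S') K by move=> z zS hz; apply: HK1 => //; exact: KcS zS.
case: (boolP (s \in Kc S')) => [sS'|nsS'].
  exists K; split; first exact: ct_refl.
  split => // z zK hz; case: (KcD1 s (HK2 z zK hz)) => // zs.
  by case/KcP: sS' => s' s'S ss'; apply/KcP; exists s' => //; apply: subset_trans ss'.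
have Hns : forall s', s' \in S' -> ~~ (s \subset s').
  by move=> s' s'S; apply/negP => ss'; apply: (negP nsS'); apply/KcP; exists s'.
case: (ltnP #|s| d) => [small|big].
  exists K; split; first exact: ct_refl.
  split => // z zK hz; case: (KcD1 s (HK2 z zK hz)) => // zs.
  by have := subset_leq_card zs; move: small hz; clear; lia.
have css : #|s| <= d.+1 by apply: hs.
have [a As Ha] := L1 Hns (leq_trans cS' big).
set zeta := s :\ a.
have sK : s \in K by apply: HK1 => //; apply/KcP; exists s.
have czeta : #|zeta| = #|s|.-1 by rewrite /zeta card_facet.
have zK : zeta \in K by apply: (CK s) => //; [exact: subD1set | rewrite czeta; lia].
have zn : zeta \notin Kc S'.
  by apply/negP => /KcP[s' s'S zs']; have := Ha s' s'S; rewrite zs'.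
have nsS'' : s \notin Kc S' by [].
have rm1 : highin d (Kc S') (K :\: [set zeta; s]).
  move=> z zS hz; rewrite !inE (HK1' z zS hz) andbT negb_or.
  by apply/andP; split; apply/eqP => e; subst z; [rewrite zS in zn | rewrite zS in nsS''].
have uniqt : forall t, t \in K -> #|s| <= #|t| -> zeta \subset t -> t = s.
  move=> t tK ct zt; case: (KcD1 s (HK2 t tK (leq_trans big ct))) => [ts|/KcP[s' s'S ts']].
    exact: sub_eq.
  by have := Ha s' s'S; rewrite (subset_trans zt ts').
have CK2 : forall i, d.-1 <= i.+1 -> exposed_by i K zeta s -> closedK d (K :\: [set zeta; s]).
  by move=> i hi ex; apply: (closed_collapse hi CK ex).
have zs : zeta \subset s by exact: subD1set.
case: (eqVneq #|s| d) => [csd|/eqP csd'].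
  have ex : exposed_by d.-2 K zeta s.
    split; [split => //; rewrite czeta csd e1 // | split => //; rewrite csd -e2 // | done | ].
    by move=> t tK ct zt; apply: uniqt => //; rewrite ct csd -e2.
  exists (K :\: [set zeta; s]); split.
    apply: (ct_step (i := d.-2)); [by rewrite !inE eqxx orbT | by exists zeta, s | exact: ct_refl].
  split => //; first by apply: (CK2 _ _ ex); rewrite -e1.
  move=> z; rewrite inE => /andP[zns zK'] hz.
  case: (KcD1 s (HK2 z zK' hz)) => // zs'.
  have csz : #|s| <= #|z| by rewrite csd.
  by rewrite (sub_eq zs' csz) !inE eqxx orbT in zns.
have csd1 : #|s| = d.+1 by move: big css csd'; clear; lia.
have ex : exposed_by d.-1 K zeta s.
  split; [split => //; rewrite czeta csd1 // | split => //; rewrite csd1 -e4 // | done | ].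
  by move=> t tK ct zt; apply: uniqt => //; rewrite ct csd1 -e4.
have [K1 [c1 G1]] : goalB d S' (K :\: [set zeta; s]).
  apply: (stageB (b0 := a) d1 csd1 cS' Hns As).
  split => //.
  - by apply: (CK2 _ _ ex).
  - move=> z; rewrite inE => /andP[_ zK'] hz.
    by case: (KcD1 s (HK2 z zK' hz)); [right | left].
  - by rewrite !inE eqxx orbT.
  - by rewrite !inE eqxx.
exists K1; split => //.
apply: (ct_step (i := d.-1)); [by rewrite !inE eqxx | by exists zeta, s | exact: c1].
Qed.

Lemma outer n d : 1 < d -> forall m (S : {set {set 'I_n}}), #|S| <= m -> #|S| <= d ->
  (forall s, s \in S -> #|s| <= d.+1) -> forall K, closedK d K -> highin d (Kc S) K ->
  highin d K (Kc S) ->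
  exists K', collapses_to [:: d.-1; d.-2] K K' /\
    (forall z, z \in K' -> #|z| != d.+1 /\ #|z| != d).
Proof.
move=> d1; elim=> [|m IH] S hm hS hs K CK H1 H2.
  move: hm; rewrite leqn0 cards_eq0 => /eqP S0.
  exists K; split; first exact: ct_refl.
  move=> z zK; have : ~~ (d <= #|z|).
    by apply/negP => h; have := H2 z zK h; rewrite S0 => /KcP[s']; rewrite inE.
  by move: d1; clear; lia.
case: (set_0Vmem S) => [S0|[s sS]].
  exists K; split; first exact: ct_refl.
  move=> z zK; have : ~~ (d <= #|z|).
    by apply/negP => h; have := H2 z zK h; rewrite S0 => /KcP[s']; rewrite inE.
  by move: d1; clear; lia.
have [K1 [c1 [CK1 G1 G2]]] := middle d1 hS hs sS CK H1 H2.
have cS : #|S| = #|S :\ s|.+1 by rewrite (cardsD1 s S) sS.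
have h1 : #|S :\ s| <= m by move: hm; rewrite cS.
have h2 : #|S :\ s| <= d by move: hS; rewrite cS => /ltnW.
have h3 : forall s', s' \in S :\ s -> #|s'| <= d.+1 by move=> s' /setD1P[_ /hs].
have [K' [c2 HK']] := IH (S :\ s) h1 h2 h3 K1 CK1 G1 G2.
by exists K'; split => //; exact: collapses_trans c1 c2.
Qed.

Theorem claim3p3 (n d : nat) (S : {set {set 'I_n}}) :
  1 < d -> #|S| <= d -> (forall s, s \in S -> #|s| <= d.+1) ->
  exists K', collapses_to [:: d.-1; d.-2] (Kc S) K' /\
    (forall z, z \in K' -> #|z| != d.+1 /\ #|z| != d).
Proof.
move=> d1 hS hs; apply: (outer d1 (leqnn #|S|) hS hs) => //.
move=> t z /KcP[s sS ts] zt _; apply/KcP; exists s => //; exact: subset_trans ts.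
Qed.
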